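(* Consider the DC network $$-L_\alpha\dot I_\alpha=V_\alpha-u_\alpha\circ V_{s\alpha},\quad -L_\beta\dot I_\beta=(\mathbf 1_{n_\beta}-u_\beta)\circ V_\beta-V_{s\beta},\quad -L_l\dot I_l=D^\top V+R_lI_l,$$ $$C_\alpha\dot V_\alpha=I_\alpha-G_\alpha V_\alpha+D_\alpha I_l,\quad C_\beta\dot V_\beta=(\mathbf 1_{n_\beta}-u_\beta)\circ I_\beta-G_\beta V_\beta+D_\beta I_l,$$ extended by $\dot u=\upsilon$ where $u=(u_\alpha^\top,u_\beta^\top)^\top$. Let $I=(I_\alpha^\top,I_\beta^\top,I_l^\top)^\top$, $V=(V_\alpha^\top,V_\beta^\top)^\top$, $L=\mathrm{diag}(L_\alpha,L_\beta,L_l)$, $C=\mathrm{diag}(C_\alpha,C_\beta)$. Then the system is passive with respect to the storage function $S=\tfrac12\dot I^\top L\dot I+\tfrac12\dot V^\top C\dot V$ and the port-variables $\dot u$ and $$y_{\mathrm{DC}}=\begin{bmatrix}\dot I_\alpha\circ V_{s\alpha}\\ \dot I_\beta\circ V_\beta-\dot V_\beta\circ I_\beta\end{bmatrix},$$ i.e. $\dot S\le\dot u^\top y_{\mathrm{DC}}$.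
   Context: The network is a connected undirected graph with $n_\alpha$ buck-converter nodes, $n_\beta$ boost-converter nodes ($n=n_\alpha+n_\beta$) and $m$ lines; $D\in\mathbb{R}^{n\times m}$ is the incidence matrix (entry $+1$/$-1$ if node $i$ is the positive/negative end of line $k$, else $0$), and $D_\alpha\in\mathbb{R}^{n_\alpha\times m}$, $D_\beta\in\mathbb{R}^{n_\beta\times m}$ are its rows for buck and boost nodes. $I_\alpha,V_\alpha,V_{s\alpha},u_\alpha\in\mathbb{R}^{n_\alpha}$; $I_\beta,V_\beta,V_{s\beta},u_\beta\in\mathbb{R}^{n_\beta}$; $I_l\in\mathbb{R}^m$ line currents; $V_{s\alpha},V_{s\beta}$ constant sources; $L_\alpha,L_\beta,L_l,C_\alpha,C_\beta,R_l,G_\alpha,G_\beta$ are positive definite diagonal matrices. $\circ$ is the entrywise (Hadamard) product, $\mathbf 1_{n_\beta}$ the all-ones vector, $u\in[0,1]^n$ duty cycles. *)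

(* Defs.v *)
From HB Require Import structures.
From mathcomp Require Import all_boot all_order all_algebra.
From mathcomp Require Import all_classical all_reals all_analysis.
Set Implicit Arguments. Unset Strict Implicit. Unset Printing Implicit Defensive.
Import Order.TTheory GRing.Theory Num.Theory.
Local Open Scope ring_scope.

Section Defs.
Variable R : realType.

Definition dvec k (f : R -> 'cV[R]_k) : R -> 'cV[R]_k :=
  fun t => \col_i (derive1 (fun s => f s i ord0) t).

Definition vderivable k (f : R -> 'cV[R]_k) (t : R) : Prop :=
  forall i, derivable (fun s => f s i ord0) t 1.

Definition had k (a b : 'cV[R]_k) : 'cV[R]_k := \col_i (a i ord0 * b i ord0).

Definition pd_diag k (A : 'M[R]_k) : Prop :=
  exists d : 'rV[R]_k, A = diag_mx d /\ forall i, 0 < d ord0 i.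

Definition is_incidence n m (D : 'M[R]_(n, m)) : Prop :=
  forall k : 'I_m, exists i j : 'I_n,
    [/\ i != j, D i k = 1, D j k = -1 &
        forall l, l != i -> l != j -> D l k = 0].

Definition incidence_connected n m (D : 'M[R]_(n, m)) : Prop :=
  forall i j : 'I_n,
    connect (fun a b => [exists k, (D a k != 0) && (D b k != 0)]) i j.

End Defs.

(* Main.v *)
Require Import Defs.
From HB Require Import structures.
From mathcomp Require Import all_boot all_order all_algebra.
From mathcomp Require Import all_classical all_reals all_analysis.
From mathcomp Require Import ring lra.
Import Order.TTheory GRing.Theory Num.Theory.
Local Open Scope ring_scope.

Set Implicit Arguments. Unset Strict Implicit.
Section H.
Variable R : realType.

Definition vder k (f : R -> 'cV[R]_k) (t : R) (f' : 'cV[R]_k) : Prop :=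
  forall i, is_derive t (1:R) (fun s => f s i ord0) (f' i ord0).

Lemma is_derive_sumf n (h : 'I_n -> R -> R) (x : R) (dh : 'I_n -> R) :
  (forall i, is_derive x (1:R) (h i) (dh i)) ->
  is_derive x (1:R) (fun s => \sum_(i < n) h i s) (\sum_(i < n) dh i).
Proof.
move=> H.
have -> : (fun s => \sum_(i < n) h i s) = \sum_(i < n) h i.
  by apply/funext => s; rewrite fct_sumE.
exact: is_derive_sum.
Qed.

Lemma vder_of k (f : R -> 'cV[R]_k) t : vderivable f t -> vder f t (dvec f t).
Proof.
move=> H i; rewrite /dvec mxE derive1E; exact: derivableP.
Qed.

Lemma vder_dvec k (f : R -> 'cV[R]_k) t f' : vder f t f' -> dvec f t = f'.
Proof.
move=> H; apply/matrixP => i j; rewrite !mxE (ord1 j) derive1E.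
by have := H i => Hi; rewrite derive_val.
Qed.

Lemma vder_vderivable k (f : R -> 'cV[R]_k) t f' : vder f t f' -> vderivable f t.
Proof. by move=> H i; have Hi := H i; exact: ex_derive. Qed.

Lemma vder_mul k l (A : 'M[R]_(k, l)) (f : R -> 'cV[R]_l) t f' :
  vder f t f' -> vder (fun s => A *m f s) t (A *m f').
Proof.
move=> H i.
have -> : (fun s => (A *m f s) i ord0) = (fun s => \sum_j (A i j * f s j ord0)).
  by apply/funext => s; rewrite mxE.
rewrite mxE; apply: is_derive_sumf => j.
have -> : (fun s => A i j * f s j ord0) = A i j *: (fun s => f s j ord0) by [].
exact: is_deriveZ.
Qed.

Lemma vder_add k (f g : R -> 'cV[R]_k) t f' g' :
  vder f t f' -> vder g t g' -> vder (fun s => f s + g s) t (f' + g').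
Proof.
move=> Hf Hg i.
have -> : (fun s => (f s + g s) i ord0) = (fun s => f s i ord0) + (fun s => g s i ord0).
  by apply/funext => s; rewrite mxE.
rewrite mxE; exact: is_deriveD.
Qed.

Lemma vder_opp k (f : R -> 'cV[R]_k) t f' :
  vder f t f' -> vder (fun s => - f s) t (- f').
Proof.
move=> Hf i.
have -> : (fun s => (- f s) i ord0) = - (fun s => f s i ord0).
  by apply/funext => s; rewrite mxE.
rewrite mxE; exact: is_deriveN.
Qed.

Lemma vder_sub k (f g : R -> 'cV[R]_k) t f' g' :
  vder f t f' -> vder g t g' -> vder (fun s => f s - g s) t (f' - g').
Proof. by move=> Hf Hg; apply: vder_add => //; apply: vder_opp. Qed.

Lemma vder_cst k (c : 'cV[R]_k) t : vder (fun _ => c) t 0.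
Proof. move=> i; rewrite mxE; exact: is_derive_cst. Qed.

Lemma vder_had k (f g : R -> 'cV[R]_k) t f' g' :
  vder f t f' -> vder g t g' ->
  vder (fun s => had (f s) (g s)) t (had f' (g t) + had (f t) g').
Proof.
move=> Hf Hg i.
have -> : (fun s => (had (f s) (g s)) i ord0) = (fun s => f s i ord0) * (fun s => g s i ord0).
  by apply/funext => s; rewrite mxE.
apply: is_derive_eq; first exact: is_deriveM.
by rewrite !mxE /= /GRing.scale /= addrC mulrC [g t i ord0 * _]mulrC.
Qed.

Lemma vder_col k l (f : R -> 'cV[R]_k) (g : R -> 'cV[R]_l) s :
  dvec (fun s => col_mx (f s) (g s)) s = col_mx (dvec f s) (dvec g s).
Proof.
rewrite -[LHS]vsubmxK; congr col_mx; apply/matrixP => i j; rewrite !mxE.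
  by congr derive1; apply/funext => x; rewrite col_mxEu.
by congr derive1; apply/funext => x; rewrite col_mxEd.
Qed.


Lemma vder_colmx k l (f : R -> 'cV[R]_k) (g : R -> 'cV[R]_l) t f' g' :
  vder f t f' -> vder g t g' -> vder (fun s => col_mx (f s) (g s)) t (col_mx f' g').
Proof.
move=> Hf Hg i; case: (split_ordP i) => j ->.
  have -> : (fun s => col_mx (f s) (g s) (lshift l j) ord0) = (fun s => f s j ord0).
    by apply/funext => s; rewrite col_mxEu.
  by rewrite col_mxEu.
have -> : (fun s => col_mx (f s) (g s) (rshift k j) ord0) = (fun s => g s j ord0).
  by apply/funext => s; rewrite col_mxEd.
by rewrite col_mxEd.
Qed.

Lemma vder_uniq k (f g : R -> 'cV[R]_k) t a b :
  (forall s, f s = g s) -> vder f t a -> vder g t b -> a = b.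
Proof.
move=> E Ha Hb; rewrite -(vder_dvec Ha) -(vder_dvec Hb).
by have -> : f = g by apply/funext.
Qed.

Definition dot k (x y : 'cV[R]_k) : R := (x^T *m y) ord0 ord0.

Lemma dotE k (x y : 'cV[R]_k) : dot x y = \sum_i x i ord0 * y i ord0.
Proof. by rewrite /dot mxE; apply: eq_bigr => i _; rewrite mxE. Qed.

Lemma dotDr k (x y z : 'cV[R]_k) : dot x (y + z) = dot x y + dot x z.
Proof. by rewrite /dot mulmxDr mxE. Qed.

Lemma dotNr k (x y : 'cV[R]_k) : dot x (- y) = - dot x y.
Proof. by rewrite /dot mulmxN mxE. Qed.

Lemma dotBr k (x y z : 'cV[R]_k) : dot x (y - z) = dot x y - dot x z.
Proof. by rewrite dotDr dotNr. Qed.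

Lemma dot0r k (x : 'cV[R]_k) : dot x 0 = 0.
Proof. by rewrite /dot mulmx0 mxE. Qed.

Lemma dotC k (x y : 'cV[R]_k) : dot x y = dot y x.
Proof. by rewrite !dotE; apply: eq_bigr => i _; rewrite mulrC. Qed.

Lemma had_dot1 k (a b c : 'cV[R]_k) : dot a (had b c) = dot b (had a c).
Proof. by rewrite !dotE; apply: eq_bigr => i _; rewrite !mxE mulrCA. Qed.

Lemma had_dot2 k (a b c : 'cV[R]_k) : dot a (had b c) = dot c (had b a).
Proof.
rewrite !dotE; apply: eq_bigr => i _; rewrite !mxE.
by rewrite mulrA mulrC (mulrC (a i ord0)).
Qed.

Lemma hadNl k (a b : 'cV[R]_k) : had (- a) b = - had a b.
Proof. by apply/matrixP => i j; rewrite !mxE mulNr. Qed.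

Lemma had0r k (a : 'cV[R]_k) : had a 0 = 0.
Proof. by apply/matrixP => i j; rewrite !mxE mulr0. Qed.

Lemma dot_psd k (A : 'M[R]_k) (x : 'cV[R]_k) : pd_diag A -> 0 <= dot x (A *m x).
Proof.
case=> d [-> hd]; rewrite dotE; apply: sumr_ge0 => i _.
rewrite mul_diag_mx mxE mulrCA; apply: mulr_ge0; first exact: ltW.
by rewrite -expr2 sqr_ge0.
Qed.

Lemma dot_tr k l (M : 'M[R]_(k, l)) (x : 'cV[R]_l) (y : 'cV[R]_k) :
  dot x (M^T *m y) = dot y (M *m x).
Proof.
have h : forall N : 'M[R]_1, N ord0 ord0 = N^T ord0 ord0 by move=> N; rewrite mxE.
by rewrite /dot h !trmx_mul !trmxK mulmxA.
Qed.

Lemma dot_col k l (a c : 'cV[R]_k) (b d : 'cV[R]_l) :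
  dot (col_mx a b) (col_mx c d) = dot a c + dot b d.
Proof. by rewrite /dot tr_col_mx mul_row_col mxE. Qed.

Lemma quad_block k l (A : 'M[R]_k) (B : 'M[R]_l) (a : 'cV[R]_k) (b : 'cV[R]_l) :
  ((col_mx a b)^T *m block_mx A 0 0 B *m col_mx a b) ord0 ord0 =
  ((a^T *m A *m a) ord0 ord0) + ((b^T *m B *m b) ord0 ord0).
Proof.
by rewrite tr_col_mx mul_row_block !mulmx0 addr0 add0r mul_row_col mxE.
Qed.

Lemma quad_der k (A : 'M[R]_k) (f : R -> 'cV[R]_k) t f' :
  pd_diag A -> vder f t f' ->
  is_derive t (1:R) (fun s => ((f s)^T *m A *m f s) ord0 ord0) (2 * dot (f t) (A *m f')).
Proof.
case=> d [-> _] Hf.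
have -> : (fun s => ((f s)^T *m diag_mx d *m f s) ord0 ord0) =
    (fun s => \sum_i (d ord0 i *: ((fun s => f s i ord0) * (fun s => f s i ord0))) s).
  apply/funext => s; rewrite mul_mx_diag mxE; apply: eq_bigr => i _.
  rewrite !mxE; transitivity (d ord0 i * (f s i ord0 * f s i ord0)); last by reflexivity.
  ring.
apply: is_derive_eq; first by apply: is_derive_sumf => i; apply: is_deriveZ; apply: is_deriveM; apply: Hf.
rewrite dotE mulr_sumr; apply: eq_bigr => i _.
rewrite mul_diag_mx mxE /= /GRing.scale /=.
ring.
Qed.

Lemma der_add' t (f g : R -> R) df dg : is_derive t (1:R) f df -> is_derive t (1:R) g dg ->
  is_derive t (1:R) (fun s => f s + g s) (df + dg).
Proof. move=> Hf Hg; exact: is_deriveD. Qed.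

Lemma der_scal' t c (f : R -> R) df : is_derive t (1:R) f df ->
  is_derive t (1:R) (fun s => c * f s) (c * df).
Proof. move=> Hf; exact: is_deriveZ. Qed.

End H.

Theorem lemma4 (R : realType) (na nb m : nat)
  (D : 'M[R]_(na + nb, m))
  (La Ca Ga : 'M[R]_na) (Lb Cb Gb : 'M[R]_nb) (Ll Rl : 'M[R]_m)
  (Vsa : 'cV[R]_na) (Vsb : 'cV[R]_nb)
  (Ia Va ua : R -> 'cV[R]_na) (Ib Vb ub : R -> 'cV[R]_nb) (Il : R -> 'cV[R]_m) :
  is_incidence D -> incidence_connected D ->
  pd_diag La -> pd_diag Lb -> pd_diag Ll -> pd_diag Ca -> pd_diag Cb ->
  pd_diag Rl -> pd_diag Ga -> pd_diag Gb ->
  (* duty cycles in [0,1] *)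
  (forall t i, 0 <= ua t i ord0 <= 1) -> (forall t i, 0 <= ub t i ord0 <= 1) ->
  (* regularity of the trajectory *)
  (forall t, vderivable ua t) -> (forall t, vderivable ub t) ->
  (forall t, vderivable Ia t) -> (forall t, vderivable Ib t) ->
  (forall t, vderivable Il t) ->
  (forall t, vderivable Va t) -> (forall t, vderivable Vb t) ->
  (forall t, vderivable (dvec Ia) t) -> (forall t, vderivable (dvec Ib) t) ->
  (forall t, vderivable (dvec Il) t) ->
  (forall t, vderivable (dvec Va) t) -> (forall t, vderivable (dvec Vb) t) ->
  (* DC network dynamics *)
  (forall t, - (La *m dvec Ia t) = Va t - had (ua t) Vsa) ->
  (forall t, - (Lb *m dvec Ib t) = had (const_mx 1 - ub t) (Vb t) - Vsb) ->
  (forall t, - (Ll *m dvec Il t) = D^T *m col_mx (Va t) (Vb t) + Rl *m Il t) ->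
  (forall t, Ca *m dvec Va t = Ia t - Ga *m Va t + usubmx D *m Il t) ->
  (forall t, Cb *m dvec Vb t =
             had (const_mx 1 - ub t) (Ib t) - Gb *m Vb t + dsubmx D *m Il t) ->
  let I := fun t => col_mx (col_mx (Ia t) (Ib t)) (Il t) in
  let V := fun t => col_mx (Va t) (Vb t) in
  let u := fun t => col_mx (ua t) (ub t) in
  let L := block_mx (block_mx La 0 0 Lb) 0 0 Ll in
  let C := block_mx Ca 0 0 Cb in
  let S := fun t => 2^-1 * ((dvec I t)^T *m L *m dvec I t) ord0 ord0
                  + 2^-1 * ((dvec V t)^T *m C *m dvec V t) ord0 ord0 in
  let y := fun t => col_mx (had (dvec Ia t) Vsa)
                           (had (dvec Ib t) (Vb t) - had (dvec Vb t) (Ib t)) in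
  forall t, derivable S t 1 /\ derive1 S t <= ((dvec u t)^T *m y t) ord0 ord0.
Proof.
move=> _ _ pLa pLb pLl pCa pCb pRl pGa pGb _ _ dua dub dIa dIb dIl dVa dVb
  ddIa ddIb ddIl ddVa ddVb HA HB HL HCa HCb I V u L C S y t.
have EA : La *m dvec (dvec Ia) t = - (dvec Va t - (had (dvec ua t) Vsa + had (ua t) 0)).
  have h := vder_uniq HA (vder_opp (vder_mul La (vder_of (ddIa t))))
    (vder_sub (vder_of (dVa t)) (vder_had (vder_of (dua t)) (vder_cst Vsa t))).
  by rewrite -h opprK.
have EB : Lb *m dvec (dvec Ib) t = - ((had (0 - dvec ub t) (Vb t) + had (const_mx 1 - ub t) (dvec Vb t)) - 0).
  have h := vder_uniq HB (vder_opp (vder_mul Lb (vder_of (ddIb t))))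
    (vder_sub (vder_had (vder_sub (vder_cst (const_mx 1) t) (vder_of (dub t))) (vder_of (dVb t))) (vder_cst Vsb t)).
  by rewrite -h opprK.
have EL : Ll *m dvec (dvec Il) t = - (D^T *m col_mx (dvec Va t) (dvec Vb t) + Rl *m dvec Il t).
  have h := vder_uniq HL (vder_opp (vder_mul Ll (vder_of (ddIl t))))
    (vder_add (vder_mul D^T (vder_colmx (vder_of (dVa t)) (vder_of (dVb t)))) (vder_mul Rl (vder_of (dIl t)))).
  by rewrite -h opprK.
have ECa : Ca *m dvec (dvec Va) t = dvec Ia t - Ga *m dvec Va t + usubmx D *m dvec Il t.
  exact: (vder_uniq HCa (vder_mul Ca (vder_of (ddVa t)))
    (vder_add (vder_sub (vder_of (dIa t)) (vder_mul Ga (vder_of (dVa t)))) (vder_mul (usubmx D) (vder_of (dIl t))))).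
have ECb : Cb *m dvec (dvec Vb) t = (had (0 - dvec ub t) (Ib t) + had (const_mx 1 - ub t) (dvec Ib t))
     - Gb *m dvec Vb t + dsubmx D *m dvec Il t.
  exact: (vder_uniq HCb (vder_mul Cb (vder_of (ddVb t)))
    (vder_add (vder_sub (vder_had (vder_sub (vder_cst (const_mx 1) t) (vder_of (dub t))) (vder_of (dIb t)))
       (vder_mul Gb (vder_of (dVb t)))) (vder_mul (dsubmx D) (vder_of (dIl t))))).
have SE : S = fun s => 2^-1 * (((dvec Ia s)^T *m La *m dvec Ia s) ord0 ord0
      + ((dvec Ib s)^T *m Lb *m dvec Ib s) ord0 ord0
      + ((dvec Il s)^T *m Ll *m dvec Il s) ord0 ord0)
    + 2^-1 * (((dvec Va s)^T *m Ca *m dvec Va s) ord0 ord0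
      + ((dvec Vb s)^T *m Cb *m dvec Vb s) ord0 ord0).
  by rewrite /S; apply/funext => s; rewrite /I /V /L /C !vder_col !quad_block.
have HS : is_derive t (1:R) S
   (2^-1 * (2 * dot (dvec Ia t) (La *m dvec (dvec Ia) t)
          + 2 * dot (dvec Ib t) (Lb *m dvec (dvec Ib) t)
          + 2 * dot (dvec Il t) (Ll *m dvec (dvec Il) t))
  + 2^-1 * (2 * dot (dvec Va t) (Ca *m dvec (dvec Va) t)
          + 2 * dot (dvec Vb t) (Cb *m dvec (dvec Vb) t))).
  rewrite SE; apply: der_add'; apply: der_scal'; repeat apply: der_add';
    apply: quad_der => //; exact: vder_of.
split; first exact: ex_derive.
rewrite derive1E (@derive_val _ _ _ _ _ _ _ HS).
have -> : ((dvec u t)^T *m y t) ord0 ord0 = dot (dvec u t) (y t) by [].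
rewrite /u vder_col /y dot_col EA EB EL ECa ECb.
rewrite had0r addr0 subr0 sub0r !hadNl !(dotDr, dotNr).
have e1 := dotC (dvec Ia t) (dvec Va t).
have e2 := had_dot1 (dvec Ia t) (dvec ua t) Vsa.
have e3 := had_dot2 (dvec Ib t) (const_mx 1 - ub t) (dvec Vb t).
have e4 := had_dot1 (dvec Ib t) (dvec ub t) (Vb t).
have e5 := had_dot1 (dvec Vb t) (dvec ub t) (Ib t).
have e6 : dot (dvec Il t) (D^T *m col_mx (dvec Va t) (dvec Vb t)) =
    dot (dvec Va t) (usubmx D *m dvec Il t) + dot (dvec Vb t) (dsubmx D *m dvec Il t).
  by rewrite dot_tr -{1}[D]vsubmxK mul_col_mx dot_col.
have p1 := dot_psd (dvec Il t) pRl.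
have p2 := dot_psd (dvec Va t) pGa.
have p3 := dot_psd (dvec Vb t) pGb.
rewrite e1 e2 e3 e4 e5 e6; move: p1 p2 p3; repeat (let x := fresh "x" in set x := dot _ _); clear -x; move=> *; lra.
Qed.
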